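(* Let $B$ be a ring and $M$ a left $B$-module with endomorphism ring $S={}_B\mathrm{End}(M)$. If $M$ is a generator of $\sigma[M]$, then $M$ is a formally smooth $B$-$S$ bimodule.
   Context: Left $B$-linear maps are written on the right of arguments, so $S$ acts on $M$ on the right. For a $B$-$A$ bimodule $M$: ${}^*M={}_B\mathrm{Hom}(M,B)$ is an $A$-$B$ bimodule via $(m)(afb)=((ma)f)b$; $\mathrm{ev}_M:M\otimes_A{}^*M\to B$, $m\otimes f\mapsto(m)f$; $\mathcal{E}_{M,B}$ is the class of $B$-bimodule maps $f:Y\to Y'$ such that ${}_B\mathrm{Hom}(M,f)$ has a right inverse as an $A$-$B$ bimodule map; a $B$-bimodule $P$ is $\mathcal{E}_{M,B}$-projective if for every $f:Y\to Y'$ in $\mathcal{E}_{M,B}$ every $B$-bimodule map $P\to Y'$ factors through $f$; $M$ is a formally smooth bimodule if $\mathrm{Ker}(\mathrm{ev}_M)$ is $\mathcal{E}_{M,B}$-projective. $\sigma[M]$ is the full subcategory of left $B$-modules subgenerated by $M$ (isomorphic to submodules of quotients of direct sums of copies of $M$); $M$ generates $\sigma[M]$ if every module in $\sigma[M]$ is a quotient of a direct sum of copies of $M$. *)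

(* Defs.v *)
(* Modules over an arbitrary (possibly non-commutative) ring B.
   Left B-linear maps are written as functions; "m s" (right S-action on M)
   is the function application s m. *)
From Stdlib Require Lists.List.
From HB Require Import structures.
From mathcomp Require Import all_boot all_order all_algebra.
Set Implicit Arguments. Unset Strict Implicit. Unset Printing Implicit Defensive.
Import GRing.Theory.
Local Open Scope ring_scope.

Definition bimod_axioms (B : pzRingType) (Y : zmodType)
    (l : B -> Y -> Y) (r : Y -> B -> Y) : Prop :=
  (forall a b y, l (a * b) y = l a (l b y)) /\
  (forall y, l 1 y = y) /\
  (forall a y z, l a (y + z) = l a y + l a z) /\
  (forall a b y, l (a + b) y = l a y + l b y) /\
  (forall y a b, r y (a * b) = r (r y a) b) /\
  (forall y, r y 1 = y) /\
  (forall y z a, r (y + z) a = r y a + r z a) /\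
  (forall y a b, r y (a + b) = r y a + r y b) /\
  (forall a y b, r (l a y) b = l a (r y b)).

Record bimod (B : pzRingType) := Bimod {
  bm_sort :> zmodType;
  bm_l : B -> bm_sort -> bm_sort;
  bm_r : bm_sort -> B -> bm_sort;
  bm_ax : bimod_axioms bm_l bm_r }.

Definition bimod_map_on (B : pzRingType) (P Y : bimod B) (K : P -> Prop)
    (h : P -> Y) : Prop :=
  (forall x y, K x -> K y -> h (x + y) = h x + h y) /\
  (forall b x, K x -> h (bm_l b x) = bm_l b (h x)) /\
  (forall x b, K x -> h (bm_r x b) = bm_r (h x) b).

Definition bimod_map (B : pzRingType) (P Y : bimod B) (h : P -> Y) : Prop :=
  bimod_map_on (fun _ => True) h.

Definition additive_fun (U V : zmodType) (h : U -> V) : Prop :=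
  forall x y, h (x + y) = h x + h y.

Definition lend (B : pzRingType) (M : lmodType B) (s : M -> M) : Prop :=
  additive_fun s /\ forall b x, s (b *: x) = b *: s x.

Definition ldual (B : pzRingType) (M : lmodType B) (f : M -> B) : Prop :=
  additive_fun f /\ forall b x, f (b *: x) = b * f x.

Definition lhom (B : pzRingType) (M : lmodType B) (Y : bimod B) (phi : M -> Y)
  : Prop :=
  additive_fun phi /\ forall b x, phi (b *: x) = bm_l b (phi x).

(* f : Y -> Y' is a B-bimodule map and _B Hom(M, f) = (f \o _) has a right
   inverse g which is an S-B bimodule map _B Hom(M,Y') -> _B Hom(M,Y), where
   (s.phi.b)(m) = (phi (s m)) b. *)
Definition in_E (B : pzRingType) (M : lmodType B) (Y Y' : bimod B)
    (f : Y -> Y') : Prop :=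
  bimod_map f /\
  exists g : (M -> Y') -> (M -> Y),
    (forall phi, lhom phi -> lhom (g phi)) /\
    (forall phi psi, lhom phi -> lhom psi ->
       g (fun m => phi m + psi m) =1 (fun m => g phi m + g psi m)) /\
    (forall s phi, lend s -> lhom phi -> g (phi \o s) =1 g phi \o s) /\
    (forall phi b, lhom phi ->
       g (fun m => bm_r (phi m) b) =1 (fun m => bm_r (g phi m) b)) /\
    (forall phi, lhom phi -> f \o g phi =1 phi).

Definition E_projective_sub (B : pzRingType) (M : lmodType B) (P : bimod B)
    (K : P -> Prop) : Prop :=
  forall (Y Y' : bimod B) (f : Y -> Y'), in_E M f ->
  forall p : P -> Y', bimod_map_on K p ->
  exists h : P -> Y, bimod_map_on K h /\ forall x, K x -> f (h x) = p x.

(* tens m f stands for m (x) f (only meaningful for f in *M);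
   (s.f)(m) = f (s m), (f.b)(m) = f m * b. *)
Definition balanced_biadd (B : pzRingType) (M : lmodType B) (G : zmodType)
    (h : M -> (M -> B) -> G) : Prop :=
  (forall m m' f, ldual f -> h (m + m') f = h m f + h m' f) /\
  (forall m f g, ldual f -> ldual g ->
     h m (fun x => f x + g x) = h m f + h m g) /\
  (forall s m f, lend s -> ldual f -> h (s m) f = h m (f \o s)).

Definition is_tensor (B : pzRingType) (M : lmodType B) (T : bimod B)
    (tens : M -> (M -> B) -> T) : Prop :=
  balanced_biadd tens /\
  (forall b m f, ldual f -> tens (b *: m) f = bm_l b (tens m f)) /\
  (forall m f b, ldual f -> tens m (fun x => f x * b) = bm_r (tens m f) b) /\
  (forall (G : zmodType) (h : M -> (M -> B) -> G), balanced_biadd h ->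
     exists u : T -> G,
       (additive_fun u /\ forall m f, ldual f -> u (tens m f) = h m f) /\
       forall u' : T -> G, additive_fun u' ->
         (forall m f, ldual f -> u' (tens m f) = h m f) -> u' =1 u).

(* M is a formally smooth bimodule: Ker(ev_M) is E_{M,B}-projective, for
   (any realization of) the tensor product M (x)_S *M and
   ev_M : m (x) f |-> f m. *)
Definition formally_smooth (B : pzRingType) (M : lmodType B) : Prop :=
  forall (T : bimod B) (tens : M -> (M -> B) -> T), is_tensor tens ->
  forall ev : T -> B, additive_fun ev ->
    (forall m f, ldual f -> ev (tens m f) = f m) ->
    E_projective_sub M (fun t : T => ev t = 0).

Definition finsupp (I : Type) (M : zmodType) (x : I -> M) : Prop :=
  exists s : list I, forall i, x i <> 0 -> Stdlib.Lists.List.In i s.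

(* pi : M^(I) -> N is a B-linear epimorphism (M^(I) = finitely supported
   functions I -> M) *)
Definition sum_epi (B : pzRingType) (M N : lmodType B) (I : Type)
    (pi : (I -> M) -> N) : Prop :=
  (forall x y, finsupp x -> finsupp y ->
     pi (fun i => x i + y i) = pi x + pi y) /\
  (forall b x, finsupp x -> pi (fun i => b *: x i) = b *: pi x) /\
  (forall n, exists x, finsupp x /\ pi x = n).

Definition generated_by (B : pzRingType) (M N : lmodType B) : Prop :=
  exists (I : Type) (pi : (I -> M) -> N), sum_epi pi.

Definition in_sigma (B : pzRingType) (M N : lmodType B) : Prop :=
  exists (I : Type) (Q : lmodType B) (pi : (I -> M) -> Q) (iota : N -> Q),
    sum_epi pi /\ additive_fun iota /\
    (forall b x, iota (b *: x) = b *: iota x) /\ injective iota.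

Definition generates_sigma (B : pzRingType) (M : lmodType B) : Prop :=
  forall N : lmodType B, in_sigma M N -> generated_by M N.

(* Main.v *)
Require Import Defs.
From HB Require Import structures.
From mathcomp Require Import all_boot all_order all_algebra.
From mathcomp Require Import generic_quotient ring_quotient.
From Stdlib Require Import ClassicalEpsilon FunctionalExtensionality ProofIrrelevance.
Set Implicit Arguments. Unset Strict Implicit. Unset Printing Implicit Defensive.
Import GRing.Theory.
Local Open Scope ring_scope.
Local Open Scope quotient_scope.

Definition asb (P : Prop) : bool :=
  if excluded_middle_informative P then true else false.
Lemma asbP (P : Prop) : reflect P (asb P).
Proof. rewrite /asb; case: excluded_middle_informative => h; by constructor. Qed.

Definition cT (T : Type) : Type := T.
Definition ceqb (T : Type) (x y : cT T) : bool := asb (x = y).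
Lemma ceqP (T : Type) : Equality.axiom (@ceqb T).
Proof. move=> x y; exact: asbP. Qed.
HB.instance Definition _ (T : Type) := hasDecEq.Build (cT T) (@ceqP T).

Definition lmB (B : pzRingType) (Y : bimod B) : Type := bm_sort Y.
HB.instance Definition _ (B : pzRingType) (Y : bimod B) := GRing.Zmodule.on (lmB Y).
Section LMB.
Variables (B : pzRingType) (Y : bimod B).
Let ax := bm_ax Y.
Lemma lmB_A a b (v : lmB Y) : bm_l a (bm_l b v) = bm_l (a * b) v.
Proof. by case: ax => h _; rewrite h. Qed.
Lemma lmB_1 : left_id 1 (@bm_l B Y : B -> lmB Y -> lmB Y).
Proof. by case: ax => _ [h _]. Qed.
Lemma lmB_Dr : right_distributive (@bm_l B Y : B -> lmB Y -> lmB Y) +%R.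
Proof. by case: ax => _ [_ [h _]]. Qed.
Lemma lmB_Dl (v : lmB Y) : {morph (@bm_l B Y)^~ v : a b / a + b}.
Proof. by case: ax => _ [_ [_ [h _]]] a b; rewrite h. Qed.
End LMB.
HB.instance Definition _ (B : pzRingType) (Y : bimod B) :=
  GRing.Zmodule_isLmodule.Build B (lmB Y) (@lmB_A B Y) (@lmB_1 B Y) (@lmB_Dr B Y) (@lmB_Dl B Y).

Definition subclosed (B : pzRingType) (V : lmodType B) (P : V -> Prop) : Prop :=
  P 0 /\ (forall x y, P x -> P y -> P (x - y)) /\ (forall b x, P x -> P (b *: x)).

Definition subT (B : pzRingType) (V : lmodType B) (P : V -> Prop) (hs : subclosed P) : Type :=
  {x : V | asb (P x)}.
HB.instance Definition _ B V P hs := Choice.on (@subT B V P hs).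
Section SubL.
Variables (B : pzRingType) (V : lmodType B) (P : V -> Prop) (hs : subclosed P).
Local Notation S := (subT hs).
Lemma sP0 : asb (P 0). Proof. by apply/asbP; have [h _] := hs. Qed.
Definition s0 : S := exist _ 0 sP0.
Lemma sPB (x y : S) : asb (P (val x - val y)).
Proof. apply/asbP; have [_ [h _]] := hs; apply: h; apply/asbP; [exact: (valP x)|exact: (valP y)]. Qed.
Definition sopp (x : S) : S := exist _ (val s0 - val x) (sPB s0 x).
Lemma sPD (x y : S) : asb (P (val x + val y)).
Proof. have := sPB x (sopp y); by rewrite /= sub0r opprK. Qed.
Definition sadd (x y : S) : S := exist _ (val x + val y) (sPD x y).
Lemma sPZ b (x : S) : asb (P (b *: val x)).
Proof. apply/asbP; have [_ [_ h]] := hs; apply: h; apply/asbP; exact: (valP x). Qed.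
Definition sscale b (x : S) : S := exist _ (b *: val x) (sPZ b x).
Lemma sval_inj : injective (fun x : S => val x).
Proof. exact: val_inj. Qed.
Lemma saddA : associative sadd.
Proof. move=> x y z; apply: val_inj => /=; exact: addrA. Qed.
Lemma saddC : commutative sadd.
Proof. move=> x y; apply: val_inj => /=; exact: addrC. Qed.
Lemma sadd0 : left_id s0 sadd.
Proof. move=> x; apply: val_inj => /=; exact: add0r. Qed.
Lemma saddN : left_inverse s0 sopp sadd.
Proof. move=> x; apply: val_inj => /=; by rewrite sub0r addNr. Qed.
End SubL.
HB.instance Definition _ B V P hs := GRing.isZmodule.Build (@subT B V P hs)
  (@saddA B V P hs) (@saddC B V P hs) (@sadd0 B V P hs) (@saddN B V P hs).
Section SubL2.
Variables (B : pzRingType) (V : lmodType B) (P : V -> Prop) (hs : subclosed P).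
Local Notation S := (subT hs).
Lemma sval0 : val (0 : S) = 0. Proof. by []. Qed.
Lemma svalD (x y : S) : val (x + y) = val x + val y. Proof. by []. Qed.
Lemma sZA a b (v : S) : sscale a (sscale b v) = sscale (a * b) v.
Proof. apply: val_inj => /=; exact: scalerA. Qed.
Lemma sZ1 : left_id 1 (@sscale B V P hs).
Proof. move=> x; apply: val_inj => /=; exact: scale1r. Qed.
Lemma sZDr : right_distributive (@sscale B V P hs) +%R.
Proof. move=> a x y; apply: val_inj => /=; exact: scalerDr. Qed.
Lemma sZDl (v : S) : {morph (@sscale B V P hs)^~ v : a b / a + b}.
Proof. move=> a b; apply: val_inj => /=; exact: scalerDl. Qed.
End SubL2.
HB.instance Definition _ B V P hs := GRing.Zmodule_isLmodule.Build B (@subT B V P hs)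
  (@sZA B V P hs) (@sZ1 B V P hs) (@sZDr B V P hs) (@sZDl B V P hs).
Lemma svalZ B V P hs b (x : @subT B V P hs) : val (b *: x) = b *: val x. Proof. by []. Qed.


Section Q.
Variables (R : zmodType) (P : R -> Prop) (h0 : P 0) (hB : forall x y, P x -> P y -> P (x - y)).
Definition Pb : {pred R} := fun x => asb (P x).
Lemma Pb_closed : zmod_closed Pb.
Proof. split; first by apply/asbP. by move=> x y /asbP hx /asbP hy; apply/asbP; apply: hB. Qed.
HB.instance Definition _ := GRing.isZmodClosed.Build R Pb Pb_closed.
Lemma quot_ex : exists (G : zmodType) (q : R -> G), additive_fun q /\ forall x, q x = 0 <-> P x.
Proof.
exists (Quotient.quot Pb). exists (\pi_(Quotient.quot Pb)). split.
  by move=> x y; rewrite Quotient.pi_add.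
move=> x; split; last first.
  move=> hx. have : (x - 0) \in Pb by rewrite subr0; apply/asbP.
  by rewrite Quotient.idealrBE => /eqP ->; rewrite piE.
move=> hx. have : (x - 0) \in Pb.
  rewrite Quotient.idealrBE; apply/eqP; rewrite hx; by rewrite piE.
by rewrite subr0 => /asbP.
Qed.
End Q.


Notation InL := Stdlib.Lists.List.In.

Lemma In_mem (I : eqType) (i : I) (l : seq I) : InL i l -> i \in l.
Proof. elim: l => //= a l IH [->|h]; rewrite in_cons; [by rewrite eqxx | by rewrite IH ?orbT]. Qed.
Lemma mem_In (I : eqType) (i : I) (l : seq I) : i \in l -> InL i l.
Proof. elim: l => [|a l IH]; first by rewrite in_nil. rewrite in_cons => /orP [/eqP ->|h]; [by left|right; exact: IH]. Qed.
Lemma nth_InL (T : Type) (x0 : T) (s : seq T) j : (j < size s)%N -> InL (nth x0 s j) s.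
Proof. elim: s j => [|a s IH] [|j] //= h; [by left|right; exact: IH]. Qed.

Lemma dbl0 (G : zmodType) (a : G) : a = a + a -> a = 0.
Proof. by move=> /(congr1 (fun t => t - a)); rewrite subrr addrK. Qed.

Section Add.
Variables (U V : zmodType) (h : U -> V) (hA : additive_fun h).
Lemma add0 : h 0 = 0.
Proof. apply: dbl0; by rewrite -hA addr0. Qed.
Lemma addN x : h (- x) = - h x.
Proof. by apply: (addrI (h x)); rewrite -hA !subrr add0. Qed.
Lemma addB x y : h (x - y) = h x - h y.
Proof. by rewrite hA addN. Qed.
Lemma add_sum (X : Type) (s : seq X) (F : X -> U) :
  h (\sum_(i <- s) F i) = \sum_(i <- s) h (F i).
Proof. elim: s => [|a s IH]; first by rewrite !big_nil add0. by rewrite !big_cons hA IH. Qed.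
End Add.

Section BM.
Variables (B : pzRingType) (Y : bimod B).
Lemma bml_add b : additive_fun (@bm_l B Y b).
Proof. by case: (bm_ax Y) => _ [_ [h _]]; move=> x y; rewrite h. Qed.
Lemma bmr_add b : additive_fun (fun y : Y => bm_r y b).
Proof. by case: (bm_ax Y) => _ [_ [_ [_ [_ [_ [h _]]]]]]; move=> x y; rewrite h. Qed.
Lemma bml_sum b (X : Type) (s : seq X) (F : X -> Y) :
  bm_l b (\sum_(i <- s) F i) = \sum_(i <- s) bm_l b (F i).
Proof. exact: (add_sum (bml_add b)). Qed.
Lemma bmr_sum b (X : Type) (s : seq X) (F : X -> Y) :
  bm_r (\sum_(i <- s) F i) b = \sum_(i <- s) bm_r (F i) b.
Proof. exact: (add_sum (bmr_add b)). Qed.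
Lemma bml0 b : bm_l b (0 : Y) = 0. Proof. exact: add0 (bml_add b). Qed.
Lemma bmr0 b : bm_r (0 : Y) b = 0. Proof. exact: add0 (bmr_add b). Qed.
Lemma bm_lr a y b : bm_r (bm_l a y) b = bm_l a (bm_r y b :> Y).
Proof. by case: (bm_ax Y) => _ [_ [_ [_ [_ [_ [_ [_ h]]]]]]]. Qed.
End BM.

Lemma sum_nz (I : Type) (G : zmodType) (F : I -> G) (s : seq I) :
  \sum_(i <- s) F i = \sum_(i <- [seq i <- s | F i != 0]) F i.
Proof. rewrite big_filter [RHS]big_mkcond; apply: eq_bigr => i _; by case: eqP. Qed.

Lemma sum_indep (I : eqType) (G : zmodType) (F : I -> G) (s1 s2 : seq I) :
  uniq s1 -> uniq s2 -> (forall i, F i != 0 -> (i \in s1) && (i \in s2)) ->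
  \sum_(i <- s1) F i = \sum_(i <- s2) F i.
Proof.
move=> u1 u2 h; rewrite (sum_nz F s1) (sum_nz F s2); apply: perm_big.
apply: uniq_perm; rewrite ?filter_uniq // => i; rewrite !mem_filter.
by case e: (F i != 0) => //=; case/andP: (h i e) => -> ->.
Qed.

Definition lin (B : pzRingType) (M N : lmodType B) (f : M -> N) : Prop :=
  additive_fun f /\ forall b x, f (b *: x) = b *: f x.

Definition delta (I : Type) (M : zmodType) (i : I) (y : M) : I -> M :=
  fun j => if asb (j = i) then y else 0.

Lemma gen_decomp (B : pzRingType) (M N : lmodType B) : generated_by M N ->
  forall n : N, exists s : seq ((M -> N) * M),
    (forall q, InL q s -> lin q.1) /\ n = \sum_(q <- s) q.1 q.2.
Proof.
move=> [I [pi [hadd [hsc hsurj]]]] n.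
have [x [[l hl] <-]] := hsurj n.
have fs0 : finsupp (fun _ : I => 0 : M) by exists [::].
have pi0 : pi (fun _ => 0) = 0.
  apply: dbl0; rewrite -hadd //; congr pi; apply: functional_extensionality => j; by rewrite addr0.
have fsd : forall (i : I) (y : M), finsupp (delta i y).
  move=> i y; exists [:: i] => j; rewrite /delta; case: asbP => [->|_] //; by left.
elim: l x hl => [|i l IH] x hl.
  exists [::]; split => //; rewrite big_nil.
  have -> : x = (fun _ => 0) ; last by [].
  apply: functional_extensionality => j; by case: (x j =P 0) => // /hl.
pose x' := fun j => if asb (j = i) then 0 else x j.
have hl' : forall j, x' j <> 0 -> InL j l.
  move=> j; rewrite /x'; case: asbP => // nj hj; case: (hl j hj) => // e; by case: nj.
have fx' : finsupp x' by exists l.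
have [s [hs1 hs2]] := IH x' hl'.
exists (((fun y => pi (delta i y)), x i) :: s); split.
  move=> q /= [<-|/hs1 //]; split.
    move=> y z /=; rewrite -hadd //; congr pi; apply: functional_extensionality => j.
    rewrite /delta; case: asbP => // _; by rewrite addr0.
  move=> b y /=; rewrite -hsc //; congr pi; apply: functional_extensionality => j.
  rewrite /delta; case: asbP => // _; by rewrite scaler0.
rewrite big_cons /= -hs2 -hadd //; congr pi; apply: functional_extensionality => j.
rewrite /delta /x'; case: asbP => [->|_]; by rewrite ?addr0 ?add0r.
Qed.


Section Tens.
Variables (B : pzRingType) (M : lmodType B).
Variables (T : bimod B) (tens : M -> (M -> B) -> T).
Variable Htens : is_tensor tens.
Variable ev : T -> B.
Variable ev_add : additive_fun ev.
Variable ev_tens : forall m f, ldual f -> ev (tens m f) = f m.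

Lemma tens_addm f : ldual f -> additive_fun (fun m => tens m f).
Proof. by case: Htens => [[h _] _] hf m m'; rewrite h. Qed.
Lemma tens_l b m f : ldual f -> tens (b *: m) f = bm_l b (tens m f).
Proof. by case: Htens => _ [h _] hf; rewrite h. Qed.
Lemma tens_r m f b : ldual f -> tens m (fun x => f x * b) = bm_r (tens m f) b.
Proof. by case: Htens => _ [_ [h _]] hf; rewrite h. Qed.
Lemma ldual_rb (f : M -> B) b : ldual f -> ldual (fun x => f x * b).
Proof. move=> [hA hL]; split; first by move=> x y; rewrite hA mulrDl. by move=> c x; rewrite hL mulrA. Qed.

Definition Idx := cT {f : M -> B | ldual f}.
Definition FF (x : Idx -> M) (i : Idx) : T := tens (x i) (proj1_sig i).
Definition sl (x : Idx -> M) : seq Idx :=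
  match excluded_middle_informative (finsupp x) with
  | left H => proj1_sig (constructive_indefinite_description _ H)
  | right _ => [::] end.
Definition piT (x : Idx -> M) : T := \sum_(i <- undup (sl x)) FF x i.

Lemma sl_cov x : finsupp x -> forall i, x i <> 0 -> i \in sl x.
Proof.
rewrite /sl; case: excluded_middle_informative => // H _.
case: constructive_indefinite_description => /= l hl i /hl; exact: In_mem.
Qed.

Lemma FF_nz x i : FF x i != 0 -> x i <> 0.
Proof. rewrite /FF => /eqP h e; apply: h; rewrite e; exact: (add0 (tens_addm (proj2_sig i))). Qed.

Lemma piT_any x s : finsupp x -> uniq s -> (forall i, x i <> 0 -> i \in s) ->
  piT x = \sum_(i <- s) FF x i.
Proof.
move=> fx us hs; apply: sum_indep; rewrite ?undup_uniq // => i /FF_nz h.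
by rewrite mem_undup sl_cov // hs.
Qed.

Lemma fsD (x y : Idx -> M) : finsupp x -> finsupp y -> finsupp (fun i => x i + y i).
Proof.
move=> [l1 h1] [l2 h2]; exists (l1 ++ l2) => i hi; apply: List.in_or_app.
case: (x i =P 0) => [e|/h1]; [right; apply: h2; move: hi; by rewrite e add0r | by left].
Qed.

Lemma fsZ b (x : Idx -> M) : finsupp x -> finsupp (fun i => b *: x i).
Proof. move=> [l h]; exists l => i hi; apply: h => e; apply: hi; by rewrite e scaler0. Qed.

Lemma fsN (x : Idx -> M) : finsupp x -> finsupp (fun i => - x i).
Proof. move=> [l h]; exists l => i hi; apply: h => e; apply: hi; by rewrite e oppr0. Qed.

Lemma piT_add x y : finsupp x -> finsupp y ->
  piT (fun i => x i + y i) = piT x + piT y.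
Proof.
move=> fx fy; set s := undup (sl x ++ sl y).
have us : uniq s by exact: undup_uniq.
have cx : forall i, x i <> 0 -> i \in s.
  by move=> i hi; rewrite mem_undup mem_cat sl_cov.
have cy : forall i, y i <> 0 -> i \in s.
  by move=> i hi; rewrite mem_undup mem_cat (sl_cov fy) ?orbT.
have cxy : forall i, x i + y i <> 0 -> i \in s.
  move=> i hi; case: (x i =P 0) => [e|hx]; last exact: cx.
  by apply: cy => e'; apply: hi; rewrite e e' addr0.
rewrite (piT_any (fsD fx fy) us cxy) (piT_any fx us cx) (piT_any fy us cy).
rewrite -big_split; apply: eq_bigr => i _; rewrite /FF; exact: (tens_addm (proj2_sig i)).
Qed.

Lemma piT_scale b x : finsupp x -> piT (fun i => b *: x i) = bm_l b (piT x).
Proof.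
move=> fx; have c : forall i, b *: x i <> 0 -> i \in undup (sl x).
  by move=> i hi; rewrite mem_undup sl_cov // => e; apply: hi; rewrite e scaler0.
rewrite (piT_any (fsZ b fx) (undup_uniq _) c) /piT bml_sum; apply: eq_bigr => i _.
rewrite /FF; exact: tens_l (proj2_sig i).
Qed.

Lemma piTN y : finsupp y -> piT (fun i => - y i) = - piT y.
Proof.
move=> fy; apply: (addrI (piT y)); rewrite -piT_add //; last exact: fsN fy.
rewrite [RHS]subrr.
have c : forall i, y i + - y i <> 0 -> i \in [::] by move=> i; rewrite subrr.
by rewrite (piT_any (fsD fy (fsN fy)) (isT : uniq [::]) c) big_nil.
Qed.

Lemma piT_delta (i : Idx) m : piT (delta i m) = tens m (proj1_sig i).
Proof.
have fd : finsupp (delta i m).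
  exists [:: i] => j; rewrite /delta; case: asbP => [->|_] //; by left.
have c : forall j, delta i m j <> 0 -> j \in [:: i].
  by move=> j; rewrite /delta; case: asbP => [->|_] //; rewrite mem_seq1.
rewrite (piT_any fd (isT : uniq [:: i]) c) big_seq1.
by rewrite /FF /delta; case: asbP.
Qed.

Lemma span (t : T) : exists x, finsupp x /\ piT x = t.
Proof.
pose P (t : T) := exists x, finsupp x /\ piT x = t.
have h0 : P 0.
  exists (fun _ => 0); have f0 : finsupp (fun _ : Idx => 0 : M) by exists [::].
  split => //; by rewrite (piT_any f0 (isT : uniq [::]) (fun i (h : (0:M) <> 0) => False_ind _ (h erefl))) big_nil.
have hB : forall x y, P x -> P y -> P (x - y).
  move=> _ _ [x [fx <-]] [y [fy <-]]; exists (fun i => x i + - y i).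
  split; [apply: fsD => //; exact: fsN | rewrite piT_add //; [by rewrite piTN | exact: fsN]].
have [G [q [qadd qiff]]] := quot_ex h0 hB.
case: Htens => _ [_ [_ hU]].
have bal0 : balanced_biadd (fun (_ : M) (_ : M -> B) => 0 : G).
  by split; [|split] => *; rewrite ?addr0.
have [u [_ hun]] := hU G _ bal0.
have e1 := hun q qadd.
have e2 := hun (fun _ => 0) (fun _ _ => esym (addr0 0)) (fun _ _ _ => erefl).
apply/qiff; rewrite e1 ?e2 // => m f hf; apply/qiff.
exists (delta (exist _ f hf : Idx) m); split; last exact: piT_delta.
exists [:: exist _ f hf : Idx] => j; rewrite /delta; case: asbP => [->|_] //; by left.
Qed.

Lemma ev_piT x : ev (\sum_(i <- undup (sl x)) FF x i) =
  \sum_(i <- undup (sl x)) proj1_sig i (x i).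
Proof. rewrite (add_sum ev_add); apply: eq_bigr => i _; exact: ev_tens (proj2_sig i). Qed.

Lemma ev_l b t : ev (bm_l b t) = b * ev t.
Proof.
have [x [_ <-]] := span t; rewrite /piT ev_piT bml_sum mulr_sumr (add_sum ev_add).
apply: eq_bigr => i _; rewrite /FF -tens_l ?ev_tens; try exact: proj2_sig i.
by case: (proj2_sig i) => _ ->.
Qed.

Lemma ev_r b t : ev (bm_r t b) = ev t * b.
Proof.
have [x [_ <-]] := span t; rewrite /piT ev_piT bmr_sum mulr_suml (add_sum ev_add).
apply: eq_bigr => i _; rewrite /FF -tens_r ?ev_tens //; try exact: proj2_sig i.
exact: ldual_rb (proj2_sig i).
Qed.

Definition Kp (t : lmB T) : Prop := ev t = 0.
Lemma hsK : subclosed Kp.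
Proof.
rewrite /Kp; split; first exact: add0 ev_add.
split; first by move=> x y hx hy; rewrite (addB ev_add) hx hy subrr.
move=> b x hx; change (ev (bm_l b x) = 0); by rewrite ev_l hx mulr0.
Qed.

Definition Km := subT hsK.

Lemma K_gen : generates_sigma M -> generated_by M Km.
Proof.
move=> Hgen; apply: Hgen.
exists Idx, (lmB T), (piT : (Idx -> M) -> lmB T), (fun k : Km => (val k : lmB T)).
split; [split; [|split] |split; [|split]].
- exact: piT_add.
- exact: piT_scale.
- exact: span.
- by [].
- by [].
- exact: val_inj.
Qed.
End Tens.


Lemma big1_InL (X : Type) (G : zmodType) (s : seq X) (F : X -> G) :
  (forall q, InL q s -> F q = 0) -> \sum_(q <- s) F q = 0.
Proof.
elim: s => [|a s IH] h; first by rewrite big_nil.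
rewrite big_cons h /=; last by left. by rewrite IH ?add0r // => q hq; apply: h; right.
Qed.
Lemma eq_big_InL (X : Type) (G : zmodType) (s : seq X) (F F' : X -> G) :
  (forall q, InL q s -> F q = F' q) -> \sum_(q <- s) F q = \sum_(q <- s) F' q.
Proof.
elim: s => [|a s IH] h; first by rewrite !big_nil.
rewrite !big_cons h /=; last by left.
by rewrite IH // => q hq; apply: h; right.
Qed.

Section Rep.
Variables (B : pzRingType) (M : lmodType B).
Variable Hgen : generates_sigma M.
Variables (T : bimod B) (tens : M -> (M -> B) -> T).
Variable Htens : is_tensor tens.
Variable ev : T -> B.
Variable ev_add : additive_fun ev.
Variable ev_tens : forall m f, ldual f -> ev (tens m f) = f m.
Variables (Y Y' : bimod B) (f : Y -> Y') (g : (M -> Y') -> (M -> Y)).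
Variable f_add : additive_fun f.
Variable g_lhom : forall phi, lhom phi -> lhom (g phi).
Variable g_add : forall phi psi, lhom phi -> lhom psi ->
  g (fun m => phi m + psi m) =1 (fun m => g phi m + g psi m).
Variable g_S : forall s phi, lend s -> lhom phi -> g (phi \o s) =1 g phi \o s.
Variable g_r : forall phi b, lhom phi ->
  g (fun m => bm_r (phi m) b) =1 (fun m => bm_r (g phi m) b).
Variable g_split : forall phi, lhom phi -> f \o g phi =1 phi.
Variable p : T -> Y'.
Variable Hp : bimod_map_on (fun t : T => ev t = 0) p.

Lemma pA x y : ev x = 0 -> ev y = 0 -> p (x + y) = p x + p y.
Proof. by case: Hp => h _; apply: h. Qed.
Lemma pL b x : ev x = 0 -> p (bm_l b x) = bm_l b (p x).
Proof. by case: Hp => _ [h _]; apply: h. Qed.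
Lemma pR x b : ev x = 0 -> p (bm_r x b) = bm_r (p x) b.
Proof. by case: Hp => _ [_ h]; apply: h. Qed.
Lemma ev0 : ev 0 = 0. Proof. exact: add0 ev_add. Qed.
Lemma p0 : p 0 = 0.
Proof. by apply: dbl0; rewrite -pA ?addr0 // ev0. Qed.

Lemma evsum0 (X : Type) (s : seq X) (F : X -> T) :
  (forall i, InL i s -> ev (F i) = 0) -> ev (\sum_(i <- s) F i) = 0.
Proof.
move=> h; rewrite (add_sum ev_add); apply: big1_InL => q hq; exact: h.
Qed.
Lemma p_sum (X : Type) (s : seq X) (F : X -> T) :
  (forall i, InL i s -> ev (F i) = 0) -> p (\sum_(i <- s) F i) = \sum_(i <- s) p (F i).
Proof.
elim: s => [|a s IH] h; first by rewrite !big_nil p0.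
have h' : forall i, InL i s -> ev (F i) = 0 by move=> i hi; apply: h; right.
rewrite !big_cons pA ?IH ?evsum0 //; by apply: h; left.
Qed.

Definition good (phi : M -> T) := lhom phi /\ forall x, ev (phi x) = 0.

Lemma good_lhom phi : good phi -> lhom (fun m => p (phi m)).
Proof.
move=> [[hA hL] hK]; split; first by move=> x y; rewrite hA pA.
by move=> b x; rewrite hL pL.
Qed.

Lemma lhom0 : lhom (fun _ : M => 0 : Y').
Proof. by split=> [x y|b x]; rewrite ?addr0 ?bml0. Qed.

Lemma g0 z : g (fun _ => 0) z = 0.
Proof.
apply: dbl0; have := g_add lhom0 lhom0 z => /= <-; congr g.
apply: functional_extensionality => m; by rewrite addr0.
Qed.

Lemma lhom_sum (X : Type) (s : seq X) (Phi : X -> M -> Y') :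
  (forall i, InL i s -> lhom (Phi i)) -> lhom (fun z => \sum_(i <- s) Phi i z).
Proof.
elim: s => [|a s IH] h.
  by split=> [x y|b x]; rewrite !big_nil ?addr0 ?bml0.
have [hA hL] := h a (or_introl erefl).
have [hA' hL'] := IH (fun i hi => h i (or_intror hi)).
split=> [x y|b x]; rewrite !big_cons.
  by rewrite hA hA' addrACA.
by rewrite hL hL' (bml_add b).
Qed.

Lemma g_sum (X : Type) (s : seq X) (Phi : X -> M -> Y') :
  (forall i, InL i s -> lhom (Phi i)) ->
  forall z, g (fun z => \sum_(i <- s) Phi i z) z = \sum_(i <- s) g (Phi i) z.
Proof.
elim: s => [|a s IH] h z.
  rewrite big_nil -(g0 z); congr g; apply: functional_extensionality => m; by rewrite big_nil.
have hs : forall i, InL i s -> lhom (Phi i) by move=> i hi; apply: h; right.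
have -> : (fun z => \sum_(i <- a :: s) Phi i z) = (fun z => Phi a z + \sum_(i <- s) Phi i z).
  by apply: functional_extensionality => m; rewrite big_cons.
by rewrite g_add ?IH ?big_cons //; [apply: h; left | exact: lhom_sum].
Qed.

Lemma lhom_comp (phi : M -> Y') (s : M -> M) : lhom phi -> lend s -> lhom (phi \o s).
Proof.
move=> [hA hL] [sA sL]; split=> [x y|b x] /=; by rewrite ?sA ?hA ?sL ?hL.
Qed.

Definition value (r : seq ((M -> T) * M)) : Y :=
  \sum_(q <- r) g (fun m => p (q.1 m)) q.2.

Lemma value0 (r : seq ((M -> T) * M)) : (forall q, InL q r -> good q.1) ->
  \sum_(q <- r) q.1 q.2 = 0 -> value r = 0.
Proof.
move=> hr hsum.
pose n := size r. pose q0 := ((fun _ : M => 0 : T), (0 : M)).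
pose phi := fun j : 'I_n => (nth q0 r j).1.
pose mm := fun j : 'I_n => (nth q0 r j).2.
have gphi : forall j : 'I_n, good (phi j).
  move=> j; apply: hr; apply: nth_InL; exact: ltn_ord.
have phi0 : forall j, phi j 0 = 0.
  by move=> j; case: (gphi j) => [[hA _] _]; exact: add0 hA.
pose PL := fun v : {ffun 'I_n -> M} => \sum_(j < n) phi j (v j) = 0.
have hsL : subclosed PL.
  split; [|split].
  - rewrite /PL big1 // => j _; by rewrite ffunE phi0.
  - move=> v w; rewrite /PL => hv hw.
    rewrite (eq_bigr (fun j => phi j (v j) - phi j (w j))).
      by rewrite sumrB hv hw subrr.
    move=> j _; rewrite !ffunE; case: (gphi j) => [[hA _] _]; by rewrite (addB hA).
  - move=> b v; rewrite /PL => hv.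
    rewrite (eq_bigr (fun j => bm_l b (phi j (v j)))).
      by rewrite -bml_sum hv bml0.
    move=> j _; rewrite ffunE; by case: (gphi j) => [[_ hL] _]; rewrite hL.
pose L := subT hsL.
have Lgen : generated_by M L.
  apply: Hgen; exists 'I_n, {ffun 'I_n -> M}, (fun x : 'I_n -> M => finfun x), (fun v : L => val v).
  split; [split; [|split]|split; [|split]].
  - by move=> x y _ _; apply/ffunP => j; rewrite !ffunE.
  - by move=> b x _; apply/ffunP => j; rewrite !ffunE.
  - move=> v; exists (fun j => v j); split; last by apply/ffunP => j; rewrite ffunE.
    exists (enum 'I_n) => j _; apply: mem_In; by rewrite mem_enum.
  - by [].
  - by [].
  - exact: val_inj.
have v0P : asb (PL [ffun j => mm j]).
  apply/asbP; rewrite /PL; rewrite (big_nth q0) big_mkord in hsum; rewrite -[RHS]hsum; apply: eq_bigr => j _; by rewrite ffunE.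
pose v0 : L := exist _ [ffun j => mm j] v0P.
have [s [hs1 hs2]] := gen_decomp Lgen v0.
have valA : additive_fun (fun v : L => val v) by [].
have mmE : forall j, mm j = \sum_(q <- s) val (q.1 q.2) j.
  move=> j; rewrite -sum_ffunE -(add_sum valA) -hs2 /= ffunE //.
rewrite /value (big_nth q0) big_mkord.
transitivity (\sum_(j < n) \sum_(q <- s) g (fun m => p (phi j m)) (val (q.1 q.2) j)).
  apply: eq_bigr => j _; rewrite -/(mm j) mmE.
  have [hA _] := g_lhom (good_lhom (gphi j)).
  exact: (add_sum hA).
rewrite exchange_big /=; apply: big1_InL => q hq.
have [qA qL] := hs1 q hq.
pose sig := fun (j : 'I_n) (z : M) => val (q.1 z) j.
have sigl : forall j, lend (sig j).
  move=> j; split=> [x y|b x]; rewrite /sig ?qA ?qL ffunE //.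
transitivity (\sum_(j < n) g (fun z => p (phi j (sig j z))) q.2).
  apply: eq_bigr => j _.
  have := g_S (sigl j) (good_lhom (gphi j)) q.2 => /= ->; by [].
rewrite -g_sum; last first.
  move=> j _; exact: (lhom_comp (good_lhom (gphi j)) (sigl j)).
have -> : (fun z => \sum_(j < n) p (phi j (sig j z))) = (fun _ => 0).
  apply: functional_extensionality => z.
  rewrite -p_sum; last by move=> j _; case: (gphi j).
  have := valP (q.1 z).
  by move/asbP; rewrite /PL /sig => ->; rewrite p0.
exact: g0.
Qed.

Definition isrep (r : seq ((M -> T) * M)) (t : T) :=
  (forall q, InL q r -> good q.1) /\ t = \sum_(q <- r) q.1 q.2.

Lemma rep_ex t : ev t = 0 -> exists r, isrep r t.
Proof.
move=> ht.
pose k : Km Htens ev_add ev_tens := exist _ t (introT (asbP _) ht).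
have [s [hs1 hs2]] := gen_decomp (K_gen Htens ev_add ev_tens Hgen) k.
exists (map (fun q => ((fun m => val (q.1 m) : T), q.2)) s); split.
- move=> q /List.in_map_iff [q' [<- hq']]; have [hA hL] := hs1 q' hq'; split; [split|].
  + by move=> x y /=; rewrite hA.
  + by move=> b x /=; rewrite hL.
  + move=> x /=; exact/asbP/(valP (q'.1 x)).
- rewrite big_map; have := congr1 (fun k : Km Htens ev_add ev_tens => (val k : T)) hs2 => /= ->.
  have valA : additive_fun (fun v : Km Htens ev_add ev_tens => (val v : T)) by [].
  exact: (add_sum valA).
Qed.

Definition rep_of (t : T) : seq ((M -> T) * M) :=
  match excluded_middle_informative (exists r, isrep r t) with
  | left H => proj1_sig (constructive_indefinite_description _ H)
  | right _ => [::] end.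
Definition hh (t : T) : Y := value (rep_of t).

Lemma good_val (phi : M -> T) : good phi -> lhom (g (fun m => p (phi m))).
Proof. move=> h; exact: g_lhom (good_lhom h). Qed.

Lemma hh_rep t r : isrep r t -> hh t = value r.
Proof.
move=> hr; rewrite /hh /rep_of; case: excluded_middle_informative => [H|]; last first.
  by case; exists r.
case: constructive_indefinite_description => r' [h1' h2'] /=.
case: hr => [h1 h2].
pose nr := map (fun q : (M -> T) * M => (q.1, - q.2)) r.
have vn : value nr = - value r.
  rewrite /value big_map -sumrN; apply: eq_big_InL => q hq /=.
  have [hA _] := good_val (h1 q hq); by rewrite (addN hA).
apply/eqP; rewrite -subr_eq0 -vn; apply/eqP.
have -> : value r' + value nr = value (r' ++ nr) by rewrite /value big_cat.
apply: value0.
  move=> q hq; case: (List.in_app_or _ _ _ hq) => [/h1' //|/List.in_map_iff [q' [<- hq']]]; last exact: h1 q' hq'.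
rewrite big_cat big_map /= -h2' -[X in _ + X = _](eq_big_InL (F := fun q => - (q.1 q.2))).
  by rewrite sumrN -h2 subrr.
move=> q hq; have [[hA _] _] := h1 q hq; by rewrite (addN hA).
Qed.

Lemma main_proj : exists h : T -> Y,
  bimod_map_on (fun t : T => ev t = 0) h /\ forall x, ev x = 0 -> f (h x) = p x.
Proof.
exists hh; split; [split; [|split]|].
- move=> x y hx hy.
  have [rx [hrx1 hrx2]] := rep_ex hx; have [ry [hry1 hry2]] := rep_ex hy.
  have hxy : isrep (rx ++ ry) (x + y).
    split; last by rewrite big_cat hrx2 hry2.
    move=> q hq; case: (List.in_app_or _ _ _ hq); [exact: hrx1 | exact: hry1].
  by rewrite (hh_rep (conj hrx1 hrx2)) (hh_rep (conj hry1 hry2)) (hh_rep hxy) /value big_cat.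
- move=> b x hx.
  have [rx [hrx1 hrx2]] := rep_ex hx.
  rewrite (@hh_rep x rx) // (@hh_rep _ (map (fun q : (M -> T) * M => (q.1, b *: q.2)) rx)).
    rewrite /value big_map bml_sum; apply: eq_big_InL => q hq /=.
    by have [_ hL] := good_val (hrx1 q hq); rewrite hL.
  split.
    by move=> q /List.in_map_iff [q' [<- hq']]; exact: (hrx1 q' hq').
  rewrite big_map hrx2 bml_sum; apply: eq_big_InL => q hq /=.
  by have [[_ hL] _] := hrx1 q hq; rewrite hL.
- move=> x b hx.
  have [rx [hrx1 hrx2]] := rep_ex hx.
  have gr : forall q, InL q rx -> good (fun z => bm_r (q.1 z) b).
    move=> q hq; have [[hA hL] hK] := hrx1 q hq; split; [split|].
    + by move=> y z; rewrite hA (bmr_add b).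
    + by move=> c z; rewrite hL bm_lr.
    + by move=> z; rewrite (ev_r Htens ev_add ev_tens) hK mul0r.
  rewrite (@hh_rep x rx) // (@hh_rep _ (map (fun q : (M -> T) * M => ((fun z => bm_r (q.1 z) b), q.2)) rx)).
    rewrite /value big_map bmr_sum; apply: eq_big_InL => q hq /=.
    have [[hA hL] hK] := hrx1 q hq.
    have -> : (fun m => p (bm_r (q.1 m) b)) = (fun m => bm_r (p (q.1 m)) b).
      by apply: functional_extensionality => m; rewrite pR.
    exact: (g_r b (good_lhom (hrx1 q hq))).
  split.
    by move=> q /List.in_map_iff [q' [<- hq']]; exact: (gr q' hq').
  by rewrite big_map hrx2 bmr_sum.
- move=> x hx.
  have [rx [hrx1 hrx2]] := rep_ex hx.
  rewrite (@hh_rep x rx) // /value (add_sum f_add) [in RHS]hrx2 p_sum.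
    apply: eq_big_InL => q hq; exact: (g_split (good_lhom (hrx1 q hq))).
  by move=> q hq; have [_ hK] := hrx1 q hq.
Qed.
End Rep.

Theorem mainTheorem11 (B : pzRingType) (M : lmodType B) :
  generates_sigma M -> formally_smooth M.
Proof.
move=> Hgen T tens Htens ev ev_add ev_tens Y Y' f [[fA _] [g [g1 [g2 [g3 [g4 g5]]]]]] p Hp.
have f_add : additive_fun f by move=> x y; exact: fA.
exact: (main_proj Hgen Htens ev_add ev_tens f_add g1 g2 g3 g4 g5 Hp).
Qed.
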